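(* In the signal design problem described in the context, define the congestion level $\chi=\frac{\min\{Vk_0,C\}}{\min\{C,(K-k_0)W\}}$. Then the optimal cycle lengths are: (1) Very sparse traffic, $\chi\in[0,\pi_0)$: multiple optimal cycle lengths $T^*=\frac1{j_1}\frac LV$ for positive integers $j_1$ with $Vk_0\le(1-\frac{2\delta}{T^*})\pi_0C$. (2) Sparse traffic, $\chi\in[\pi_0,1)$: a unique optimal cycle length $T^*=\chi\frac{L}{\pi_0V}+2\delta$. (3) Critical traffic, $\chi=1$: a unique optimal cycle length $T^*=\infty$. (4) Dense traffic, $\chi\in(1,\frac1{\pi_0}]$: a unique optimal cycle length $T^*=\frac1\chi\frac{L}{\pi_0W}+2\delta$. (5) Very dense traffic, $\chi\in(\frac1{\pi_0},\infty)$: multiple optimal cycle lengths $T^*=\frac1{j_2}\frac LW$ for positive integers $j_2$ with $(K-k_0)W\le(1-\frac{2\delta}{T^*})\pi_0C$.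
   Context: Signalized ring road of length $L>0$ with LWR traffic, triangular fundamental diagram $Q(k)=\min\{Vk,(K-k)W\}$, $\bar K=\frac{W}{V+W}K$, $C=V\bar K$, average density $k_0\in[0,K]$, pretimed two-phase signal with cycle length $T$. With a start-up lost time $\delta>0$ per phase and a fixed allocation ratio $\pi_0\in(0,1)$, the effective green ratio is $\pi=(1-\frac{2\delta}T)\pi_0$, $T\ge2\delta$. In stationary states the average flow-rate is $\bar g=\min\{\phi_1,\pi C,\phi_2\}$ with $\phi_1=\frac{k_0}{k_1}\pi C$, $\phi_2=\frac{K-k_0}{K-k_2}\pi C$, where $\frac LV=(j_1+\alpha_1)T$, $j_1=\lfloor L/(VT)\rfloor$, $0\le\alpha_1<1$, $\frac LW=(j_2+\alpha_2)T$, $j_2=\lfloor L/(WT)\rfloor$, $0\le\alpha_2<1$, $k_1=\frac{j_1+\min\{\alpha_1/\pi,1\}}{j_1+\alpha_1}\pi\bar K$, $k_2=K-\frac{j_2+\min\{\alpha_2/\pi,1\}}{j_2+\alpha_2}\pi\frac CW$. Assuming $L/V$ and $L/W$ are much larger than $2\delta$, $\pi$ is replaced by $\pi_0$ in $\phi_1,\phi_2$ (but not in the term $\pi C=(1-\frac{2\delta}T)\pi_0C$); an optimal cycle length is a maximizer over $T\ge2\delta$ of $\min\{\phi_1,(1-\frac{2\delta}T)\pi_0C,\phi_2\}$. *)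

(* Defs.v *)
From Stdlib Require Import Reals.
Open Scope R_scope.

(* Triangular fundamental diagram constants. *)
Definition Kbar (V W K : R) : R := W / (V + W) * K.
Definition Cap (V W K : R) : R := V * Kbar V W K.

Definition jfl (x : R) : R := IZR (Int_part x).
Definition alf (x : R) : R := frac_part x.

(* Critical densities, with pi replaced by pi0 (standing assumption). *)
Definition k1 (L V W K pi0 T : R) : R :=
  let x := L / (V * T) in
  (jfl x + Rmin (alf x / pi0) 1) / (jfl x + alf x) * pi0 * Kbar V W K.
Definition k2 (L V W K pi0 T : R) : R :=
  let x := L / (W * T) in
  K - (jfl x + Rmin (alf x / pi0) 1) / (jfl x + alf x) * pi0 * (Cap V W K / W).

Definition phi1 (L V W K k0 pi0 T : R) : R :=
  k0 / k1 L V W K pi0 T * pi0 * Cap V W K.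
Definition phi2 (L V W K k0 pi0 T : R) : R :=
  (K - k0) / (K - k2 L V W K pi0 T) * pi0 * Cap V W K.

Definition gbar (L V W K k0 delta pi0 T : R) : R :=
  Rmin (Rmin (phi1 L V W K k0 pi0 T) ((1 - 2 * delta / T) * pi0 * Cap V W K))
       (phi2 L V W K k0 pi0 T).

Definition optimal_cycle (L V W K k0 delta pi0 T : R) : Prop :=
  2 * delta <= T /\
  forall T', 2 * delta <= T' -> gbar L V W K k0 delta pi0 T' <= gbar L V W K k0 delta pi0 T.

Definition chi (V W K k0 : R) : R :=
  Rmin (V * k0) (Cap V W K) / Rmin (Cap V W K) ((K - k0) * W).

(* "T* = infinity is the unique optimal cycle length": the objective has a
   supremum l which it approaches as T -> +oo, while on every bounded range
   [2 delta, M] it stays uniformly below l (so no finite T is optimal). *)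
Definition optimal_at_infinity (f : R -> R) (delta : R) : Prop :=
  exists l : R,
    (forall T, 2 * delta <= T -> f T <= l) /\
    (forall M, exists eps, 0 < eps /\ forall T, 2 * delta <= T <= M -> f T <= l - eps) /\
    (forall eps, 0 < eps -> exists M, forall T, M <= T -> l - eps < f T).

(* Main.v *)
Require Import Defs.
From Stdlib Require Import Reals Lra Lia ZArith.
Open Scope R_scope.

Definition rr (pi0 x : R) : R := x / (jfl x + Rmin (alf x / pi0) 1).

Lemma jfl_alf x : jfl x + alf x = x.
Proof. unfold jfl, alf, frac_part. ring. Qed.

Lemma jfl_nonneg x : 0 <= x -> 0 <= jfl x.
Proof.
  intros Hx. unfold jfl. destruct (base_Int_part x) as [H1 H2].
  assert (IZR (-1) < IZR (Int_part x)) by lra.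
  apply lt_IZR in H. apply IZR_le. lia.
Qed.

Lemma alf_bounds x : 0 <= alf x < 1.
Proof. unfold alf. destruct (base_fp x). lra. Qed.

Lemma rr_facts pi0 x : 0 < pi0 < 1 -> 0 < x ->
  0 < jfl x + Rmin (alf x / pi0) 1 /\
  alf x <= Rmin (alf x / pi0) 1 /\
  pi0 * (jfl x + Rmin (alf x / pi0) 1) <= x /\
  x <= jfl x + Rmin (alf x / pi0) 1.
Proof.
  intros Hp Hx. pose proof (jfl_alf x). pose proof (jfl_nonneg x ltac:(lra)).
  pose proof (alf_bounds x).
  assert (alf x <= alf x / pi0).
  { apply (Rmult_le_reg_l pi0); [lra|]. field_simplify; [|lra]. nra. }
  assert (pi0 * (alf x / pi0) = alf x) by (field; lra).
  unfold Rmin; destruct (Rle_dec (alf x / pi0) 1); repeat split; nra.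
Qed.

Lemma rr_bounds pi0 x : 0 < pi0 < 1 -> 0 < x -> pi0 <= rr pi0 x <= 1.
Proof.
  intros Hp Hx. destruct (rr_facts pi0 x Hp Hx) as (H1 & H2 & H3 & H4).
  unfold rr. split.
  - apply (Rmult_le_reg_r (jfl x + Rmin (alf x / pi0) 1)); [lra|].
    field_simplify; lra.
  - apply (Rmult_le_reg_r (jfl x + Rmin (alf x / pi0) 1)); [lra|].
    field_simplify; lra.
Qed.

Lemma rr_one pi0 x : 0 < pi0 < 1 -> 0 < x -> rr pi0 x = 1 ->
  exists n, (0 < n)%nat /\ x = INR n.
Proof.
  intros Hp Hx Hr. destruct (rr_facts pi0 x Hp Hx) as (H1 & H2 & H3 & H4).
  unfold rr in Hr.
  assert (E : x = jfl x + Rmin (alf x / pi0) 1).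
  { apply (Rmult_eq_reg_r (/ (jfl x + Rmin (alf x / pi0) 1))).
    - rewrite Rinv_r; lra.
    - apply Rgt_not_eq, Rlt_gt, Rinv_0_lt_compat; lra. }
  pose proof (jfl_alf x). pose proof (alf_bounds x).
  assert (Ha : alf x = 0).
  { destruct (Req_dec (alf x) 0) as [|Hn]; auto.
    assert (alf x < alf x / pi0).
    { apply (Rmult_lt_reg_l pi0); [lra|]. field_simplify; [|lra]. nra. }
    exfalso. unfold Rmin in E; destruct (Rle_dec (alf x / pi0) 1); lra. }
  assert (Hj : x = IZR (Int_part x)) by (unfold jfl in *; lra).
  assert (Z0 : (0 < Int_part x)%Z) by (apply lt_IZR; lra).
  exists (Z.to_nat (Int_part x)). split; [lia|].
  rewrite INR_IZR_INZ, Z2Nat.id by lia. exact Hj.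
Qed.

Lemma rr_nat pi0 n : 0 < pi0 < 1 -> (0 < n)%nat -> rr pi0 (INR n) = 1.
Proof.
  intros Hp Hn. unfold rr, jfl, alf, frac_part. rewrite Int_part_INR.
  rewrite <- INR_IZR_INZ. replace (INR n - INR n) with 0 by ring.
  replace (0 / pi0) with 0 by (field; lra).
  rewrite Rmin_left by lra. assert (0 < INR n) by (apply lt_0_INR; lia).
  field. lra.
Qed.

Lemma small_parts x : 0 <= x < 1 -> jfl x = 0 /\ alf x = x.
Proof.
  intros Hx. pose proof (jfl_alf x). pose proof (jfl_nonneg x ltac:(lra)).
  destruct (base_Int_part x) as [H1 H2]. unfold jfl in *.
  assert (IZR (Int_part x) < IZR 1) by lra. apply lt_IZR in H3.
  assert (Int_part x = 0%Z). { apply le_IZR in H0. lia. }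
  rewrite H4 in *. simpl in *. lra.
Qed.

Lemma rr_mid pi0 x : 0 < pi0 < 1 -> pi0 <= x < 1 -> rr pi0 x = x.
Proof.
  intros Hp Hx. destruct (small_parts x ltac:(lra)) as [E1 E2].
  unfold rr. rewrite E1, E2. rewrite Rmin_right.
  - field.
  - apply (Rmult_le_reg_l pi0); [lra|]. field_simplify; lra.
Qed.

Lemma rr_low pi0 x : 0 < pi0 < 1 -> 0 < x < pi0 -> rr pi0 x = pi0.
Proof.
  intros Hp Hx. destruct (small_parts x ltac:(lra)) as [E1 E2].
  unfold rr. rewrite E1, E2. rewrite Rmin_left.
  - field. lra.
  - apply (Rmult_le_reg_l pi0); [lra|]. field_simplify; lra.
Qed.

Definition hh (a U P delta pi0 L T : R) : R :=
  Rmin (a * rr pi0 (L / (U * T))) ((1 - 2 * delta / T) * P).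

Definition opt (f : R -> R) (delta T : R) : Prop :=
  2 * delta <= T /\ forall T', 2 * delta <= T' -> f T' <= f T.

Lemma caseA a U P delta pi0 : 0 < a < P -> 0 < U -> 0 < delta -> 0 < pi0 < 1 ->
  exists L0, 0 < L0 /\ forall L, L0 <= L -> forall T,
   opt (hh a U P delta pi0 L) delta T <->
   exists j : nat, (0 < j)%nat /\ T = / INR j * (L / U) /\ a <= (1 - 2 * delta / T) * P.
Proof.
  intros Ha HU Hd Hp.
  exists (2 * delta * U * P / (P - a) + 1). split.
  { assert (0 < 2 * delta * U * P / (P - a)) by (apply Rdiv_lt_0_compat; repeat apply Rmult_lt_0_compat; lra). lra. }
  intros L HL T.
  assert (HL0 : 0 < L).
  { assert (0 < 2 * delta * U * P / (P - a)) by (apply Rdiv_lt_0_compat; repeat apply Rmult_lt_0_compat; lra). lra. }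
  assert (Hbound : forall T', 2 * delta <= T' -> hh a U P delta pi0 L T' <= a).
  { intros T' HT'. unfold hh. eapply Rle_trans; [apply Rmin_l|].
    assert (0 < L / (U * T')) by (apply Rdiv_lt_0_compat; repeat apply Rmult_lt_0_compat; lra).
    destruct (rr_bounds pi0 _ Hp H). nra. }
  assert (HT0 : a <= (1 - 2 * delta / (L / U)) * P).
  { assert (2 * delta * U * P / (P - a) <= L) by lra.
    apply (Rmult_le_compat_r (P - a)) in H; [|lra].
    replace (2 * delta * U * P / (P - a) * (P - a)) with (2 * delta * U * P) in H by (field; lra).
    replace (2 * delta / (L / U)) with (2 * delta * U / L) by (field; lra).
    apply (Rmult_le_reg_r L); [lra|].
    replace ((1 - 2 * delta * U / L) * P * L) with (P * L - 2 * delta * U * P) by (field; lra).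
    nra. }
  assert (Hpos : forall T', a <= (1 - 2 * delta / T') * P -> 0 < T' -> 2 * delta <= T').
  { intros T' H1 H2. assert (0 < 1 - 2 * delta / T') by nra.
    assert (2 * delta / T' < 1) by lra.
    apply (Rmult_lt_compat_r T') in H0; [|lra].
    unfold Rdiv in H0. rewrite Rmult_assoc, Rinv_l in H0 by lra. lra. }
  assert (HLU : 0 < L / U) by (apply Rdiv_lt_0_compat; lra).
  assert (Hval : forall n, (0 < n)%nat -> a <= (1 - 2 * delta / (/ INR n * (L / U))) * P ->
            hh a U P delta pi0 L (/ INR n * (L / U)) = a).
  { intros n Hn Hc. assert (0 < INR n) by (apply lt_0_INR; lia).
    unfold hh. replace (L / (U * (/ INR n * (L / U)))) with (INR n) by (field; lra).
    rewrite rr_nat by auto. rewrite Rmult_1_r. apply Rmin_left. exact Hc. }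
  split.
  - intros [H1 H2].
    assert (HT : 0 < T) by lra.
    assert (Hge : a <= hh a U P delta pi0 L T).
    { assert (E1 : / INR 1 * (L / U) = L / U) by (simpl; field; lra).
      assert (Hc0 : a <= (1 - 2 * delta / (/ INR 1 * (L / U))) * P) by (rewrite E1; exact HT0).
      assert (HT1 : 2 * delta <= / INR 1 * (L / U)) by (apply Hpos; [exact Hc0| rewrite E1; exact HLU]).
      specialize (H2 _ HT1). rewrite Hval in H2 by auto. exact H2. }
    assert (Hx : 0 < L / (U * T)) by (apply Rdiv_lt_0_compat; repeat apply Rmult_lt_0_compat; lra).
    destruct (rr_bounds pi0 _ Hp Hx).
    unfold hh in Hge.
    assert (Hr : a * rr pi0 (L / (U * T)) >= a) by (pose proof (Rmin_l (a * rr pi0 (L / (U * T))) ((1 - 2 * delta / T) * P)); lra).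
    assert (rr pi0 (L / (U * T)) = 1) by nra.
    destruct (rr_one pi0 _ Hp Hx H3) as [n [Hn En]].
    exists n. split; [auto|]. split.
    + assert (0 < INR n) by (apply lt_0_INR; lia).
      rewrite <- En. field. nra.
    + pose proof (Rmin_r (a * rr pi0 (L / (U * T))) ((1 - 2 * delta / T) * P)). lra.
  - intros [n [Hn [ET Hc]]].
    assert (0 < INR n) by (apply lt_0_INR; lia).
    assert (0 < T) by (rewrite ET; apply Rmult_lt_0_compat; [apply Rinv_0_lt_compat|]; lra).
    split; [apply Hpos; auto|].
    intros T' HT'. rewrite ET in *. rewrite Hval by auto. auto.
Qed.

Lemma caseB a U P delta pi0 : 0 < a -> P <= a -> pi0 * a < P -> 0 < U -> 0 < delta -> 0 < pi0 < 1 ->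
  exists L0, 0 < L0 /\ forall L, L0 <= L -> forall T,
   opt (hh a U P delta pi0 L) delta T <-> T = a * L / (P * U) + 2 * delta.
Proof.
  intros Ha HPa HPp HU Hd Hp.
  assert (HP : 0 < P) by nra.
  assert (HD : 0 < P - pi0 * a) by lra.
  assert (HQ : 0 < 2 * delta * U * P / (P - pi0 * a))
    by (apply Rdiv_lt_0_compat; repeat apply Rmult_lt_0_compat; lra).
  exists (2 * delta * U * P / (P - pi0 * a) + 1). split; [lra|].
  intros L HL.
  assert (HL0 : 0 < L) by lra.
  assert (HLD : 2 * delta * U * P < L * (P - pi0 * a)).
  { assert (2 * delta * U * P / (P - pi0 * a) < L) by lra.
    apply (Rmult_lt_compat_r (P - pi0 * a)) in H; [|lra].
    replace (2 * delta * U * P / (P - pi0 * a) * (P - pi0 * a)) with (2 * delta * U * P) in H by (field; lra).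
    exact H. }
  set (Ts := a * L / (P * U) + 2 * delta).
  assert (HA : 0 < a * L / (P * U)) by (apply Rdiv_lt_0_compat; repeat apply Rmult_lt_0_compat; lra).
  assert (HTs : 0 < Ts) by (unfold Ts; lra).
  set (xs := L / (U * Ts)).
  assert (Exs : xs * (U * Ts) = L) by (unfold xs; field; lra).
  assert (HUT : 0 < U * Ts) by (apply Rmult_lt_0_compat; lra).
  assert (EUT : U * Ts = a * L / P + 2 * delta * U) by (unfold Ts; field; lra).
  assert (HaLP : L <= a * L / P).
  { apply (Rmult_le_reg_r P); [lra|]. replace (a * L / P * P) with (a * L) by (field; lra). nra. }
  assert (Hx1 : xs < 1).
  { assert (L < U * Ts) by (rewrite EUT; nra). nra. }
  assert (Hx0 : pi0 < xs).
  { assert (pi0 * (U * Ts) < L).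
    { rewrite EUT. replace (pi0 * (a * L / P + 2 * delta * U)) with ((pi0 * a * L + 2 * pi0 * delta * U * P) / P) by (field; lra).
      apply (Rmult_lt_reg_r P); [lra|]. replace ((pi0 * a * L + 2 * pi0 * delta * U * P) / P * P) with (pi0 * a * L + 2 * pi0 * delta * U * P) by (field; lra).
      assert (2 * pi0 * delta * U * P < 2 * delta * U * P).
      { assert (0 < 2 * delta * U * P) by (repeat apply Rmult_lt_0_compat; lra). nra. }
      nra. }
    nra. }
  assert (Emid : (1 - 2 * delta / Ts) * P = a * xs).
  { assert (E2 : Ts - 2 * delta = a * L / (P * U)) by (unfold Ts; ring).
    replace (1 - 2 * delta / Ts) with ((Ts - 2 * delta) / Ts) by (field; lra).
    rewrite E2. unfold xs. clearbody Ts. field. repeat split; lra. }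
  assert (Hval : hh a U P delta pi0 L Ts = a * xs).
  { unfold hh. fold xs. rewrite rr_mid by lra. rewrite Emid. apply Rmin_left; lra. }
  assert (Hstrict : forall T, 0 < T -> T <> Ts -> hh a U P delta pi0 L T < a * xs).
  { intros T HT Hne. destruct (Rtotal_order T Ts) as [Hlt|[Heq|Hgt]]; [|contradiction|].
    - unfold hh. eapply Rle_lt_trans; [apply Rmin_r|]. rewrite <- Emid.
      apply Rmult_lt_compat_r; [lra|].
      assert (2 * delta / Ts < 2 * delta / T).
      { unfold Rdiv. apply Rmult_lt_compat_l; [lra|]. apply Rinv_lt_contravar; nra. }
      lra.
    - unfold hh. eapply Rle_lt_trans; [apply Rmin_l|].
      set (x := L / (U * T)).
      assert (Ex : x * (U * T) = L) by (unfold x; field; lra).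
      assert (HUT' : 0 < U * T) by (apply Rmult_lt_0_compat; lra).
      assert (Hxp : 0 < x) by (unfold x; apply Rdiv_lt_0_compat; lra).
      assert (Hxx : x < xs).
      { assert (U * Ts < U * T) by nra. nra. }
      destruct (Rlt_le_dec x pi0).
      + rewrite rr_low by lra. nra.
      + rewrite rr_mid by lra. nra. }
  intros T. split.
  - intros [H1 H2].
    assert (HT : 0 < T) by lra.
    destruct (Req_dec T Ts) as [|Hne]; auto.
    exfalso. specialize (H2 Ts ltac:(unfold Ts; lra)). rewrite Hval in H2.
    specialize (Hstrict T HT Hne). lra.
  - intros ->. split; [unfold Ts; lra|].
    intros T' HT'. rewrite Hval.
    destruct (Req_dec T' Ts) as [->|Hne]; [lra|].
    left. apply Hstrict; lra.
Qed.

Lemma phi1_eq L V W K k0 pi0 T : 0 < V -> 0 < W -> 0 < K -> 0 < pi0 < 1 -> 0 < L -> 0 < T ->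
  phi1 L V W K k0 pi0 T = V * k0 * rr pi0 (L / (V * T)).
Proof.
  intros HV HW HK Hp HL HT.
  unfold phi1, k1, rr, Cap. cbv zeta.
  assert (Hx : 0 < L / (V * T)) by (apply Rdiv_lt_0_compat; [|apply Rmult_lt_0_compat]; lra).
  destruct (rr_facts pi0 _ Hp Hx) as (H1 & _).
  rewrite jfl_alf.
  set (m := jfl (L / (V * T)) + Rmin (alf (L / (V * T)) / pi0) 1) in *.
  assert (0 < Kbar V W K) by (unfold Kbar; apply Rmult_lt_0_compat; [apply Rdiv_lt_0_compat|]; lra).
  field. repeat split; lra.
Qed.

Lemma phi2_eq L V W K k0 pi0 T : 0 < V -> 0 < W -> 0 < K -> 0 < pi0 < 1 -> 0 < L -> 0 < T ->
  phi2 L V W K k0 pi0 T = (K - k0) * W * rr pi0 (L / (W * T)).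
Proof.
  intros HV HW HK Hp HL HT.
  unfold phi2, k2, rr. cbv zeta.
  assert (Hx : 0 < L / (W * T)) by (apply Rdiv_lt_0_compat; [|apply Rmult_lt_0_compat]; lra).
  destruct (rr_facts pi0 _ Hp Hx) as (H1 & _).
  rewrite jfl_alf.
  set (m := jfl (L / (W * T)) + Rmin (alf (L / (W * T)) / pi0) 1) in *.
  assert (0 < Cap V W K) by (unfold Cap, Kbar; apply Rmult_lt_0_compat; [|apply Rmult_lt_0_compat; [apply Rdiv_lt_0_compat|]]; lra).
  set (c := Cap V W K) in *. clearbody c m.
  assert (0 < m * T * pi0 * c) by (repeat apply Rmult_lt_0_compat; lra).
  field. repeat split; lra.
Qed.

Lemma opt_ext f g delta T : (forall T, 2 * delta <= T -> f T = g T) ->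
  (opt f delta T <-> opt g delta T).
Proof.
  intros H. unfold opt. split; intros [H1 H2]; split; auto; intros T' HT';
  [rewrite <- !H | rewrite !H]; auto.
Qed.

Lemma gbar_sparse L V W K k0 delta pi0 T : 0 < V -> 0 < W -> 0 < K -> 0 < delta -> 0 < pi0 < 1 ->
  0 < L -> 2 * delta <= T -> Cap V W K <= (K - k0) * W ->
  gbar L V W K k0 delta pi0 T = hh (V * k0) V (pi0 * Cap V W K) delta pi0 L T.
Proof.
  intros HV HW HK Hd Hp HL HT Hb.
  unfold gbar, hh. rewrite phi1_eq, phi2_eq by lra.
  assert (Hx : 0 < L / (W * T)) by (apply Rdiv_lt_0_compat; [|apply Rmult_lt_0_compat]; lra).
  destruct (rr_bounds pi0 _ Hp Hx).
  assert (HC : 0 < Cap V W K) by (unfold Cap, Kbar; apply Rmult_lt_0_compat; [|apply Rmult_lt_0_compat; [apply Rdiv_lt_0_compat|]]; lra).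
  assert (0 < 2 * delta / T) by (apply Rdiv_lt_0_compat; lra).
  rewrite Rmin_left.
  - f_equal; ring.
  - eapply Rle_trans; [apply Rmin_r|].
    set (c := Cap V W K) in *. clearbody c.
    set (r := rr pi0 (L / (W * T))) in *. set (d := 2 * delta / T) in *.
    assert (pi0 * c <= pi0 * ((K - k0) * W)) by (apply Rmult_le_compat_l; lra).
    assert (pi0 * ((K - k0) * W) <= (K - k0) * W * r) by (rewrite Rmult_comm; apply Rmult_le_compat_l; lra).
    assert (0 < d * (pi0 * c)) by (apply Rmult_lt_0_compat; nra).
    lra.
Qed.

Lemma gbar_dense L V W K k0 delta pi0 T : 0 < V -> 0 < W -> 0 < K -> 0 < delta -> 0 < pi0 < 1 ->
  0 < L -> 2 * delta <= T -> Cap V W K <= V * k0 ->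
  gbar L V W K k0 delta pi0 T = hh ((K - k0) * W) W (pi0 * Cap V W K) delta pi0 L T.
Proof.
  intros HV HW HK Hd Hp HL HT Hb.
  unfold gbar, hh. rewrite phi1_eq, phi2_eq by lra.
  assert (Hx : 0 < L / (V * T)) by (apply Rdiv_lt_0_compat; [|apply Rmult_lt_0_compat]; lra).
  destruct (rr_bounds pi0 _ Hp Hx).
  assert (HC : 0 < Cap V W K) by (unfold Cap, Kbar; apply Rmult_lt_0_compat; [|apply Rmult_lt_0_compat; [apply Rdiv_lt_0_compat|]]; lra).
  assert (0 < 2 * delta / T) by (apply Rdiv_lt_0_compat; lra).
  rewrite (Rmin_right (V * k0 * _)).
  - rewrite Rmin_comm. f_equal; ring.
  - set (c := Cap V W K) in *. clearbody c.
    set (r := rr pi0 (L / (V * T))) in *. set (d := 2 * delta / T) in *.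
    assert (pi0 * c <= pi0 * (V * k0)) by (apply Rmult_le_compat_l; lra).
    assert (pi0 * (V * k0) <= V * k0 * r) by (rewrite Rmult_comm; apply Rmult_le_compat_l; lra).
    assert (0 < d * (pi0 * c)) by (apply Rmult_lt_0_compat; nra).
    lra.
Qed.

Lemma optimal_iff L V W K k0 delta pi0 T f :
  (forall T, 2 * delta <= T -> gbar L V W K k0 delta pi0 T = f T) ->
  (optimal_cycle L V W K k0 delta pi0 T <-> opt f delta T).
Proof.
  intros H. change (opt (gbar L V W K k0 delta pi0) delta T <-> opt f delta T).
  apply opt_ext. exact H.
Qed.

Theorem corollary4p2 :
  forall (V W K k0 delta pi0 : R),
    0 < V -> 0 < W -> 0 < K -> 0 < k0 < K -> 0 < delta -> 0 < pi0 < 1 ->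
    exists L0 : R, 0 < L0 /\
    forall L : R, L0 <= L ->
      let C := Cap V W K in
      let x := chi V W K k0 in
      (* (1) very sparse *)
      (x < pi0 ->
         forall T, optimal_cycle L V W K k0 delta pi0 T <->
           exists j : nat, (0 < j)%nat /\ T = / INR j * (L / V) /\
             V * k0 <= (1 - 2 * delta / T) * pi0 * C) /\
      (* (2) sparse *)
      (pi0 <= x < 1 ->
         forall T, optimal_cycle L V W K k0 delta pi0 T <->
           T = x * (L / (pi0 * V)) + 2 * delta) /\
      (* (3) critical *)
      (x = 1 ->
         optimal_at_infinity (gbar L V W K k0 delta pi0) delta) /\
      (* (4) dense *)
      (1 < x <= / pi0 ->
         forall T, optimal_cycle L V W K k0 delta pi0 T <->
           T = / x * (L / (pi0 * W)) + 2 * delta) /\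
      (* (5) very dense *)
      (/ pi0 < x ->
         forall T, optimal_cycle L V W K k0 delta pi0 T <->
           exists j : nat, (0 < j)%nat /\ T = / INR j * (L / W) /\
             (K - k0) * W <= (1 - 2 * delta / T) * pi0 * C).
Proof.
  intros V W K k0 delta pi0 HV HW HK Hk0 Hd Hp.
  assert (HKb : Kbar V W K = W * K / (V + W)) by (unfold Kbar; field; lra).
  assert (HC1 : Cap V W K = V * Kbar V W K) by reflexivity.
  assert (HC2 : Cap V W K = (K - Kbar V W K) * W) by (rewrite HC1, HKb; field; lra).
  assert (HKb0 : 0 < Kbar V W K) by (rewrite HKb; apply Rdiv_lt_0_compat; nra).
  assert (HC : 0 < Cap V W K) by (rewrite HC1; nra).
  assert (Hpi : 1 < / pi0).
  { rewrite <- Rinv_1. apply Rinv_lt_contravar; lra. }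
  unfold chi.
  set (Kb := Kbar V W K) in *. set (C := Cap V W K) in *.
  destruct (Rtotal_order k0 Kb) as [Hs|[Hc|Hdn]].
  -
    assert (Ha : V * k0 < C) by (rewrite HC1; nra).
    assert (Hb : C < (K - k0) * W) by (rewrite HC2; nra).
    rewrite (Rmin_left (V * k0)) by lra. rewrite (Rmin_left C) by lra.
    assert (Hchi : V * k0 / C < 1).
    { apply (Rmult_lt_reg_r C); [lra|]. field_simplify; lra. }
    assert (Hg : forall L, 0 < L -> forall T, 2 * delta <= T ->
      gbar L V W K k0 delta pi0 T = hh (V * k0) V (pi0 * C) delta pi0 L T).
    { intros L HL T HT. apply gbar_sparse; try lra; unfold C in Hb; lra. }
    assert (Hk0V : 0 < V * k0) by nra.
    destruct (Rlt_le_dec (V * k0) (pi0 * C)) as [HA|HB].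
    + destruct (caseA (V * k0) V (pi0 * C) delta pi0 ltac:(lra) HV Hd Hp) as [L0 [HL0 HLA]].
      exists L0. split; auto. intros L HL. cbv zeta.
      split; [|split; [|split; [|split]]]; try (intros; exfalso; lra).
      * intros _ T. rewrite (optimal_iff _ _ _ _ _ _ _ _ _ (Hg L ltac:(lra))).
        rewrite (HLA L HL T). split; intros [j [Hj [E1 E2]]]; exists j; repeat split; auto;
        (rewrite Rmult_assoc in *; exact E2) || (rewrite <- Rmult_assoc; exact E2).
      * intros [H1 _]. exfalso.
        assert (pi0 * C <= V * k0 / C * C) by (apply Rmult_le_compat_r; lra).
        replace (V * k0 / C * C) with (V * k0) in H by (field; lra). lra.
    + assert (HB2 : pi0 * (V * k0) < pi0 * C) by (apply Rmult_lt_compat_l; lra).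
      destruct (caseB (V * k0) V (pi0 * C) delta pi0 Hk0V HB HB2 HV Hd Hp) as [L0 [HL0 HLB]].
      exists L0. split; auto. intros L HL. cbv zeta.
      split; [|split; [|split; [|split]]]; try (intros; exfalso; lra).
      * intros H1. exfalso.
        assert (V * k0 / C * C < pi0 * C) by (apply Rmult_lt_compat_r; lra).
        replace (V * k0 / C * C) with (V * k0) in H by (field; lra). lra.
      * intros _ T. rewrite (optimal_iff _ _ _ _ _ _ _ _ _ (Hg L ltac:(lra))).
        rewrite (HLB L HL T).
        replace (V * k0 / C * (L / (pi0 * V))) with (V * k0 * L / (pi0 * C * V)) by (field; lra).
        tauto.
  -
    subst k0.
    assert (Ha : V * Kb = C) by lra.
    assert (Hb : (K - Kb) * W = C) by lra.
    rewrite Ha, Hb, Rmin_left by lra.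
    exists 1. split; [lra|]. intros L HL. cbv zeta.
    assert (Hone : C / C = 1) by (field; lra). rewrite Hone.
    split; [|split; [|split; [|split]]]; try (intros; exfalso; lra).
    intros _.
    assert (Hg : forall T, 2 * delta <= T ->
      gbar L V W K Kb delta pi0 T = (1 - 2 * delta / T) * (pi0 * C)).
    { intros T HT. rewrite gbar_dense by (try lra; unfold C in Ha; lra). unfold hh. rewrite Hb.
      apply Rmin_right.
      assert (Hx : 0 < L / (W * T)) by (apply Rdiv_lt_0_compat; [|apply Rmult_lt_0_compat]; lra).
      destruct (rr_bounds pi0 _ Hp Hx).
      assert (0 < 2 * delta / T) by (apply Rdiv_lt_0_compat; lra).
      set (r := rr pi0 (L / (W * T))) in *. set (d := 2 * delta / T) in *.
      clearbody C.
      assert (pi0 * C <= C * r) by (rewrite (Rmult_comm C); apply Rmult_le_compat_r; lra).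
      assert (0 < d * (pi0 * C)) by (apply Rmult_lt_0_compat; nra). lra. }
    assert (HPC : 0 < pi0 * C) by nra.
    exists (pi0 * C). split; [|split].
    + intros T HT. rewrite Hg by auto.
      assert (0 < 2 * delta / T) by (apply Rdiv_lt_0_compat; lra). nra.
    + intros M. exists (2 * delta * (pi0 * C) / (Rabs M + 1)).
      assert (HM : 0 < Rabs M + 1) by (pose proof (Rabs_pos M); lra).
      split; [apply Rdiv_lt_0_compat; [|lra]; nra|].
      intros T [HT1 HT2]. rewrite Hg by auto.
      assert (HTM : T <= Rabs M + 1) by (pose proof (Rle_abs M); lra).
      assert (2 * delta / (Rabs M + 1) <= 2 * delta / T).
      { unfold Rdiv. apply Rmult_le_compat_l; [lra|]. apply Rinv_le_contravar; lra. }
      replace (2 * delta * (pi0 * C) / (Rabs M + 1)) with (2 * delta / (Rabs M + 1) * (pi0 * C)) by (field; lra).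
      nra.
    + intros eps Heps. exists (2 * delta * (pi0 * C) / eps + 2 * delta + 1).
      intros T HT.
      assert (H0 : 0 < 2 * delta * (pi0 * C) / eps) by (apply Rdiv_lt_0_compat; nra).
      assert (HT0 : 0 < T) by lra.
      rewrite Hg by lra.
      assert (2 * delta * (pi0 * C) < eps * T).
      { apply (Rmult_le_compat_r eps) in HT; [|lra].
        replace ((2 * delta * (pi0 * C) / eps + 2 * delta + 1) * eps) with (2 * delta * (pi0 * C) + eps * (2 * delta + 1)) in HT by (field; lra).
        assert (0 < eps * (2 * delta + 1)) by nra. rewrite (Rmult_comm eps T). lra. }
      replace ((1 - 2 * delta / T) * (pi0 * C)) with (pi0 * C - 2 * delta * (pi0 * C) / T) by (field; lra).
      assert (2 * delta * (pi0 * C) / T < eps).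
      { apply (Rmult_lt_reg_r T); [lra|]. replace (2 * delta * (pi0 * C) / T * T) with (2 * delta * (pi0 * C)) by (field; lra). lra. }
      lra.
  -
    assert (Ha : C < V * k0) by (rewrite HC1; nra).
    assert (Hb : (K - k0) * W < C) by (rewrite HC2; nra).
    assert (Hb0 : 0 < (K - k0) * W) by nra.
    rewrite (Rmin_right (V * k0)) by lra. rewrite (Rmin_right C) by lra.
    assert (Hchi : 1 < C / ((K - k0) * W)).
    { apply (Rmult_lt_reg_r ((K - k0) * W)); [lra|]. field_simplify; lra. }
    assert (Hg : forall L, 0 < L -> forall T, 2 * delta <= T ->
      gbar L V W K k0 delta pi0 T = hh ((K - k0) * W) W (pi0 * C) delta pi0 L T).
    { intros L HL T HT. apply gbar_dense; try lra; unfold C in Ha; lra. }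
    destruct (Rlt_le_dec ((K - k0) * W) (pi0 * C)) as [HA|HB].
    + destruct (caseA ((K - k0) * W) W (pi0 * C) delta pi0 ltac:(lra) HW Hd Hp) as [L0 [HL0 HLA]].
      exists L0. split; auto. intros L HL. cbv zeta.
      split; [|split; [|split; [|split]]]; try (intros; exfalso; lra).
      * intros [_ H1]. exfalso.
        assert (C / ((K - k0) * W) * ((K - k0) * W) <= / pi0 * ((K - k0) * W)) by (apply Rmult_le_compat_r; lra).
        replace (C / ((K - k0) * W) * ((K - k0) * W)) with C in H by (field; lra).
        assert (pi0 * C <= pi0 * (/ pi0 * ((K - k0) * W))) by (apply Rmult_le_compat_l; lra).
        replace (pi0 * (/ pi0 * ((K - k0) * W))) with ((K - k0) * W) in H0 by (field; lra). lra.
      * intros _ T. rewrite (optimal_iff _ _ _ _ _ _ _ _ _ (Hg L ltac:(lra))).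
        rewrite (HLA L HL T). split; intros [j [Hj [E1 E2]]]; exists j; repeat split; auto;
        (rewrite Rmult_assoc in *; exact E2) || (rewrite <- Rmult_assoc; exact E2).
    + assert (HB2 : pi0 * ((K - k0) * W) < pi0 * C) by (apply Rmult_lt_compat_l; lra).
      destruct (caseB ((K - k0) * W) W (pi0 * C) delta pi0 Hb0 HB HB2 HW Hd Hp) as [L0 [HL0 HLB]].
      exists L0. split; auto. intros L HL. cbv zeta.
      split; [|split; [|split; [|split]]]; try (intros; exfalso; lra).
      * intros _ T. rewrite (optimal_iff _ _ _ _ _ _ _ _ _ (Hg L ltac:(lra))).
        rewrite (HLB L HL T).
        replace (/ (C / ((K - k0) * W)) * (L / (pi0 * W))) with ((K - k0) * W * L / (pi0 * C * W)) by (field; repeat split; lra).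
        tauto.
      * intros H1. exfalso.
        assert (/ pi0 * ((K - k0) * W) < C / ((K - k0) * W) * ((K - k0) * W)) by (apply Rmult_lt_compat_r; lra).
        replace (C / ((K - k0) * W) * ((K - k0) * W)) with C in H by (field; lra).
        assert (pi0 * (/ pi0 * ((K - k0) * W)) < pi0 * C) by (apply Rmult_lt_compat_l; lra).
        replace (pi0 * (/ pi0 * ((K - k0) * W))) with ((K - k0) * W) in H0 by (field; lra). lra.
Qed.
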